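(* $\Gamma_2(VP_3)/\Gamma_3(VP_3)\cong\mathbb{Z}^9$.
   Context: $VP_3$ is the group with generators $\lambda_{k,l}$, $1\le k\ne l\le 3$, and defining relations $\lambda_{k,i}\lambda_{k,j}\lambda_{i,j}=\lambda_{i,j}\lambda_{k,j}\lambda_{k,i}$ for all pairwise distinct $i,j,k\in\{1,2,3\}$. (Equivalently, it is the kernel of the homomorphism from the virtual braid group $VB_3$ to $S_3$ sending both $\sigma_i$ and $\rho_i$ to the transposition $(i\ i{+}1)$.) For a group $G$, $\Gamma_1(G)=G$, $\Gamma_i(G)=[\Gamma_{i-1}(G),G]$. *)

(* Defs.v *)
(* The group VP_3 is encoded by its presentation: elements are
   words in the generators lambda_{k,l} (k <> l in {1,2,3}, encoded as 'I_3)
   and their inverses, modulo the congruence [vp3_eqv] generated by free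
   cancellation and the defining relations. *)
From mathcomp Require Import all_boot all_order all_algebra.
Set Implicit Arguments. Unset Strict Implicit. Unset Printing Implicit Defensive.

Definition vp3_gen := {p : 'I_3 * 'I_3 | p.1 != p.2}.

(* a letter: a generator with an exponent flag (true = inverse) *)
Definition vp3_letter := (vp3_gen * bool)%type.
Definition vp3_word := seq vp3_letter.

Definition lam (k l : 'I_3) (h : k != l) : vp3_gen := exist _ (k, l) h.
Definition pos (g : vp3_gen) : vp3_letter := (g, false).
Definition inv_letter (x : vp3_letter) : vp3_letter := (x.1, ~~ x.2).

(* group operations on words: product = concatenation, identity = [::] *)
Definition winv (w : vp3_word) : vp3_word := rev (map inv_letter w).
Definition wcomm (x y : vp3_word) : vp3_word := winv x ++ winv y ++ x ++ y.

Inductive vp3_eqv : vp3_word -> vp3_word -> Prop :=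
| eqv_refl w : vp3_eqv w w
| eqv_sym u v : vp3_eqv u v -> vp3_eqv v u
| eqv_trans u v w : vp3_eqv u v -> vp3_eqv v w -> vp3_eqv u w
| eqv_cancel u v x : vp3_eqv (u ++ [:: x; inv_letter x] ++ v) (u ++ v)
| eqv_rel u v (i j k : 'I_3) (hki : k != i) (hkj : k != j) (hij : i != j) :
    vp3_eqv (u ++ [:: pos (lam hki); pos (lam hkj); pos (lam hij)] ++ v)
            (u ++ [:: pos (lam hij); pos (lam hkj); pos (lam hki)] ++ v).

Inductive gen_subgroup (S : vp3_word -> Prop) : vp3_word -> Prop :=
| gs_base w : S w -> gen_subgroup S w
| gs_one : gen_subgroup S [::]
| gs_mul u v : gen_subgroup S u -> gen_subgroup S v -> gen_subgroup S (u ++ v)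
| gs_inv u : gen_subgroup S u -> gen_subgroup S (winv u)
| gs_eqv u v : vp3_eqv u v -> gen_subgroup S u -> gen_subgroup S v.

(* lower central series, shifted: LCS n = Gamma_{n+1}(VP_3) *)
Fixpoint LCS (n : nat) : vp3_word -> Prop :=
  match n with
  | 0 => fun _ => True
  | n'.+1 => gen_subgroup (fun w => exists x y, LCS n' x /\ w = wcomm x y)
  end.

Definition Gamma (i : nat) : vp3_word -> Prop := LCS i.-1.

(* Main.v *)
Require Import Defs.
From mathcomp Require Import all_boot all_order all_algebra.
From Stdlib Require Import Setoid Morphisms.
From mathcomp Require Import ring zify.
Import GRing.Theory.
Set Implicit Arguments. Unset Strict Implicit. Unset Printing Implicit Defensive.

Notation eqv := vp3_eqv.

Lemma eqv_catl a u v : eqv u v -> eqv (a ++ u) (a ++ v).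
Proof.
elim=> {u v}.
- by move=> w; apply: eqv_refl.
- by move=> u v _ H; apply: eqv_sym.
- by move=> u v w _ H1 _ H2; apply: eqv_trans H2.
- by move=> u v x; rewrite !(catA a u); apply: eqv_cancel.
- by move=> u v i j k hki hkj hij; rewrite !(catA a u); apply: eqv_rel.
Qed.

Lemma eqv_catr b u v : eqv u v -> eqv (u ++ b) (v ++ b).
Proof.
elim=> {u v}.
- by move=> w; apply: eqv_refl.
- by move=> u v _ H; apply: eqv_sym.
- by move=> u v w _ H1 _ H2; apply: eqv_trans H2.
- by move=> u v x; rewrite -!catA; apply: eqv_cancel.
- by move=> u v i j k hki hkj hij; rewrite -!catA; apply: eqv_rel.
Qed.

#[global] Instance eqv_Equiv : Equivalence eqv.
Proof.
split; first exact: eqv_refl.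
- move=> x y; exact: eqv_sym.
- move=> x y z; exact: eqv_trans.
Qed.

#[global] Instance cat_eqv_Proper : Proper (eqv ==> eqv ==> eqv) (@cat vp3_letter).
Proof.
move=> u u' Hu v v' Hv.
apply: (@eqv_trans _ (u' ++ v)); [exact: eqv_catr | exact: eqv_catl].
Qed.

Lemma inv_letterK : involutive inv_letter.
Proof. by case=> g b; rewrite /inv_letter /= negbK. Qed.

Lemma winvK : involutive winv.
Proof. by move=> u; rewrite /winv map_rev revK (mapK inv_letterK). Qed.

Lemma winv_cat u v : winv (u ++ v) = winv v ++ winv u.
Proof. by rewrite /winv map_cat rev_cat. Qed.

Lemma winv_cons x u : winv (x :: u) = winv u ++ [:: inv_letter x].
Proof. by rewrite /winv /= rev_cons cats1. Qed.

Lemma cancelR u : eqv (u ++ winv u) [::].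
Proof.
elim: u => [|x u IH] /=; first reflexivity.
rewrite winv_cons catA.
have -> : x :: ((u ++ winv u) ++ [:: inv_letter x]) = [:: x] ++ (u ++ winv u) ++ [:: inv_letter x] by [].
rewrite IH /=.
exact: (eqv_cancel [::] [::] x).
Qed.

Lemma cancelL u : eqv (winv u ++ u) [::].
Proof. by have := cancelR (winv u); rewrite winvK. Qed.

Lemma canR u c : eqv (u ++ (winv u ++ c)) c.
Proof. rewrite catA; setoid_rewrite cancelR; reflexivity. Qed.

Lemma canL u c : eqv (winv u ++ (u ++ c)) c.
Proof. rewrite catA; setoid_rewrite cancelL; reflexivity. Qed.

#[global] Instance gs_Proper S : Proper (eqv ==> iff) (gen_subgroup S).
Proof.
move=> u v H; split=> Hg; first exact: gs_eqv Hg.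
by apply: gs_eqv Hg; symmetry.
Qed.

Lemma winv_conj g u : winv (winv g ++ u ++ g) = winv g ++ winv u ++ g.
Proof. by rewrite !winv_cat winvK catA. Qed.

Lemma conj_comm g x y :
  eqv (winv g ++ wcomm x y ++ g) (wcomm (winv g ++ x ++ g) (winv g ++ y ++ g)).
Proof.
rewrite /wcomm !winv_conj -!catA.
repeat setoid_rewrite canR; reflexivity.
Qed.

Lemma gs_normal S :
  (forall w g, S w -> gen_subgroup S (winv g ++ w ++ g)) ->
  forall w, gen_subgroup S w -> forall g, gen_subgroup S (winv g ++ w ++ g).
Proof.
move=> HS w; elim=> {w}.
- by move=> w Sw g; apply: HS.
- by move=> g /=; rewrite cancelL; apply: gs_one.
- move=> u v _ Hu _ Hv g.
  have -> : winv g ++ (u ++ v) ++ g = winv g ++ u ++ (v ++ g) by rewrite -!catA.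
  have E : eqv ((winv g ++ u ++ g) ++ (winv g ++ v ++ g)) (winv g ++ u ++ (v ++ g)).
    by rewrite -!catA; setoid_rewrite canR; reflexivity.
  apply: (gs_eqv E); exact: gs_mul.
- by move=> u _ Hu g; have := gs_inv (Hu g); rewrite winv_conj.
- move=> u v E _ Hu g; apply: (gs_eqv _ (Hu g)).
  by apply: eqv_catl; apply: eqv_catr.
Qed.

Lemma LCS_normal n w g : LCS n w -> LCS n (winv g ++ w ++ g).
Proof.
elim: n w g => [//|n IH] w g /= Hw.
move: g; apply: (@gs_normal _ _ w Hw) => w' g' [x [y [Hx ->]]].
rewrite conj_comm; apply: gs_base.
by exists (winv g' ++ x ++ g'), (winv g' ++ y ++ g'); split => //; apply: IH.
Qed.

Lemma LCS_base n x y : LCS n x -> LCS n.+1 (wcomm x y).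
Proof. by move=> Hx; apply: gs_base; exists x, y. Qed.

Lemma LCS_mul n u v : LCS n u -> LCS n v -> LCS n (u ++ v).
Proof. by case: n => //= n; apply: gs_mul. Qed.

Lemma LCS_inv n u : LCS n u -> LCS n (winv u).
Proof. by case: n => //= n; apply: gs_inv. Qed.

Lemma LCS_one n : LCS n [::].
Proof. by case: n => //= n; apply: gs_one. Qed.

#[global] Instance LCS_Proper n : Proper (eqv ==> iff) (LCS n).
Proof. by case: n => //= n; apply: gs_Proper. Qed.

Lemma eqv_winv u v : eqv u v -> eqv (winv u) (winv v).
Proof.
move=> H.
transitivity (winv u ++ (v ++ winv v)); first by setoid_rewrite cancelR; rewrite cats0; reflexivity.
transitivity (winv u ++ (u ++ winv v)); last exact: canL.
by apply: eqv_catl; apply: eqv_catr; symmetry.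
Qed.

#[global] Instance winv_eqv_Proper : Proper (eqv ==> eqv) winv.
Proof. move=> u v; exact: eqv_winv. Qed.

Definition cong u v := LCS 2 (u ++ winv v).

#[global] Instance cong_Equiv : Equivalence cong.
Proof.
split.
- by move=> u; rewrite /cong; setoid_rewrite cancelR; apply: LCS_one.
- by move=> u v; rewrite /cong => H; have := LCS_inv H; rewrite winv_cat winvK.
- move=> u v w; rewrite /cong => H1 H2; have := LCS_mul H1 H2.
  by rewrite -!catA; setoid_rewrite canL.
Qed.

Lemma eqv_cong u v : eqv u v -> cong u v.
Proof. by move=> H; rewrite /cong; setoid_rewrite H; setoid_rewrite cancelR; apply: LCS_one. Qed.

#[global] Instance eqv_cong_sub : subrelation eqv cong.
Proof. move=> u v; exact: eqv_cong. Qed.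

#[global] Instance cat_cong_Proper : Proper (cong ==> cong ==> cong) (@cat vp3_letter).
Proof.
move=> u u' Hu v v' Hv; rewrite /cong.
have A := LCS_normal (winv u) Hv; rewrite winvK in A.
have := LCS_mul A Hu; rewrite winv_cat -!catA; setoid_rewrite canL.
by [].
Qed.

#[global] Instance winv_cong_Proper : Proper (cong ==> cong) winv.
Proof.
move=> u v H; rewrite /cong winvK.
have H' : cong v u by symmetry.
have := LCS_normal u H'; rewrite /cong -!catA; setoid_rewrite cancelL; rewrite cats0.
by [].
Qed.

Lemma central c g : LCS 1 c -> cong (c ++ g) (g ++ c).
Proof.
move=> Hc; rewrite /cong winv_cat.
have := LCS_base (winv g) (LCS_inv Hc); rewrite /wcomm !winvK -!catA.
by [].
Qed.

Lemma central_l c g r : LCS 1 c -> cong (g ++ (c ++ r)) (c ++ (g ++ r)).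
Proof.
move=> Hc; rewrite !catA.
apply: cat_cong_Proper; last reflexivity.
symmetry; exact: central.
Qed.

Lemma swap a b : eqv (a ++ b) (b ++ a ++ wcomm a b).
Proof.
rewrite /wcomm -?catA; symmetry.
setoid_rewrite canR; setoid_rewrite canR; reflexivity.
Qed.

Lemma LCS1_comm x y : LCS 1 (wcomm x y).
Proof. exact: LCS_base. Qed.

Lemma comm_catl a b y : cong (wcomm (a ++ b) y) (wcomm a y ++ wcomm b y).
Proof.
transitivity (winv b ++ (wcomm a y ++ (b ++ wcomm b y))).
  apply: eqv_cong; rewrite /wcomm winv_cat -?catA; symmetry.
  setoid_rewrite canR; setoid_rewrite canR; reflexivity.
rewrite (central_l _ _ (LCS1_comm a y)).
apply: eqv_cong; setoid_rewrite canL; reflexivity.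
Qed.

Lemma comm_invl a y : cong (wcomm (winv a) y) (winv (wcomm a y)).
Proof.
transitivity (a ++ (winv (wcomm a y) ++ winv a)).
  apply: eqv_cong; rewrite /wcomm !winv_cat !winvK -?catA; symmetry.
  setoid_rewrite cancelR; rewrite cats0; reflexivity.
rewrite -[winv a]cats0.
rewrite (central_l _ _ (LCS_inv (LCS1_comm a y))).
apply: eqv_cong; rewrite cats0; setoid_rewrite cancelR; rewrite cats0; reflexivity.
Qed.

Lemma comm_sym x y : wcomm y x = winv (wcomm x y).
Proof. by rewrite /wcomm !winv_cat !winvK -?catA. Qed.

Lemma cong_lcancel a u v : cong (a ++ u) (a ++ v) -> cong u v.
Proof.
move=> H.
transitivity (winv a ++ (a ++ u)); first by apply: eqv_cong; symmetry; apply: canL.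
rewrite H; apply: eqv_cong; apply: canL.
Qed.

Lemma cong_solve a b : cong (a ++ b) [::] -> cong b (winv a).
Proof.
move=> H.
transitivity (winv a ++ (a ++ b)); first by apply: eqv_cong; symmetry; apply: canL.
rewrite H cats0; reflexivity.
Qed.

Lemma rel_cong x y z : eqv (x ++ y ++ z) (z ++ y ++ x) ->
  cong (wcomm x y ++ wcomm x z ++ wcomm y z) [::].
Proof.
move=> R.
apply: (@cong_lcancel (z ++ y ++ x)); rewrite cats0.
have E1 : eqv (x ++ y ++ z) (z ++ x ++ wcomm x z ++ y ++ wcomm y z).
  have S1 := swap y z; have S2 := swap x z; move: S1 S2.
  move: (wcomm y z) (wcomm x z) => c c' S1 S2.
  apply: (eqv_trans (eqv_catl x S1)).
  rewrite !catA; apply: eqv_catr; apply: eqv_catr.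
  by rewrite -catA.
have E2 : cong (z ++ x ++ wcomm x z ++ y ++ wcomm y z)
               (z ++ x ++ y ++ wcomm x z ++ wcomm y z).
  apply: cat_cong_Proper; first reflexivity.
  apply: cat_cong_Proper; first reflexivity.
  symmetry; exact: (central_l _ _ (LCS1_comm _ _)).
have E3 : eqv (z ++ x ++ y ++ wcomm x z ++ wcomm y z)
              (z ++ y ++ x ++ wcomm x y ++ wcomm x z ++ wcomm y z).
  have S := swap x y; move: S; move: (wcomm x y) (wcomm x z) (wcomm y z) => c c' c'' S.
  apply: eqv_catl; rewrite !catA; apply: eqv_catr; apply: eqv_catr.
  by rewrite -catA.
rewrite -?catA -R.
symmetry; rewrite (eqv_cong E1) E2 (eqv_cong E3) -?catA; reflexivity.
Qed.

Local Open Scope ring_scope.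

Definition o0 : 'I_3 := @Ordinal 3 0 isT.
Definition o1 : 'I_3 := @Ordinal 3 1 isT.
Definition o2 : 'I_3 := @Ordinal 3 2 isT.

Definition gi (k l : nat) : nat :=
  match k, l with
  | 0, 1 => 0 | 0, 2 => 1 | 1, 0 => 2 | 1, 2 => 3 | 2, 0 => 4 | 2, 1 => 5
  | _, _ => 0 end%N.

Lemma gi_lt k l : (gi k l < 6)%N.
Proof. by case: k => [|[|[|k]]]; case: l => [|[|[|l]]]. Qed.

Definition gidx (g : vp3_gen) : 'I_6 := Ordinal (gi_lt (val g).1 (val g).2).
Arguments gidx : simpl never.

Definition mkg (k l : 'I_3) (H : k != l) : vp3_gen := exist _ (k, l) H.

Definition genn (p : nat) : vp3_gen :=
  match p with
  | 0 => @mkg o0 o1 isT | 1 => @mkg o0 o2 isT | 2 => @mkg o1 o0 isT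
  | 3 => @mkg o1 o2 isT | 4 => @mkg o2 o0 isT | _ => @mkg o2 o1 isT end%N.

Lemma genn_gidx g : genn (gidx g) = g.
Proof.
case: g => [[k l] H]; apply: val_inj => /=.
case: k H => [[|[|[|k]]] Hk] //; case: l => [[|[|[|l]]] Hl] // H;
  by rewrite ?(eq_irrelevance Hk isT) ?(eq_irrelevance Hl isT).
Qed.

Definition dv n (m : nat) : 'rV[int]_n := \row_(j < n) ((j : nat) == m)%:R.

Definition d9 := dv 9.

Definition kap (p q : nat) : 'rV[int]_9 :=
  match p, q with
  | 1%N, 0%N => d9 0 | 2%N, 0%N => d9 1 | 3%N, 1%N => d9 2 | 3%N, 2%N => d9 3
  | 4%N, 1%N => d9 4 | 4%N, 2%N => d9 5 | 5%N, 0%N => d9 6 | 5%N, 3%N => d9 7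
  | 5%N, 4%N => d9 8
  | 4%N, 0%N => d9 8 - d9 6 | 2%N, 1%N => d9 3 - d9 2 | 5%N, 2%N => - d9 8 - d9 5
  | 3%N, 0%N => - d9 0 - d9 2 | 4%N, 3%N => d9 3 - d9 5 | 5%N, 1%N => d9 0 - d9 6
  | _, _ => 0 end.

Definition Bk (i k : 'I_6) : 'rV[int]_9 := if (k < i)%N then kap i k else 0.

Definition beta (a b : 'rV[int]_6) : 'rV[int]_9 :=
  \sum_(i < 6) \sum_(k < 6) (a 0 i * b 0 k) *: Bk i k.

Lemma betaDl a a' b : beta (a + a') b = beta a b + beta a' b.
Proof.
rewrite /beta -big_split; apply: eq_bigr => i _.
rewrite -big_split; apply: eq_bigr => k _.
by rewrite mxE mulrDl scalerDl.
Qed.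

Lemma betaDr a b b' : beta a (b + b') = beta a b + beta a b'.
Proof.
rewrite /beta -big_split; apply: eq_bigr => i _.
rewrite -big_split; apply: eq_bigr => k _.
by rewrite mxE mulrDr scalerDl.
Qed.

Lemma betaNl a b : beta (- a) b = - beta a b.
Proof.
rewrite /beta -sumrN; apply: eq_bigr => i _.
rewrite -sumrN; apply: eq_bigr => k _.
by rewrite mxE mulNr scaleNr.
Qed.

Lemma betaNr a b : beta a (- b) = - beta a b.
Proof.
rewrite /beta -sumrN; apply: eq_bigr => i _.
rewrite -sumrN; apply: eq_bigr => k _.
by rewrite mxE mulrN scaleNr.
Qed.

Lemma beta0l b : beta 0 b = 0.
Proof.
rewrite /beta big1 // => i _; rewrite big1 // => k _.
by rewrite mxE mul0r scale0r.
Qed.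

Lemma beta0r a : beta a 0 = 0.
Proof.
rewrite /beta big1 // => i _; rewrite big1 // => k _.
by rewrite mxE mulr0 scale0r.
Qed.

Lemma beta_dv (i0 k0 : 'I_6) : beta (dv 6 i0) (dv 6 k0) = Bk i0 k0.
Proof.
rewrite /beta (bigD1 i0) //=.
rewrite [X in _ + X]big1 ?addr0; last first.
  move=> i Hi; rewrite big1 // => k _.
  by rewrite !mxE (negbTE (Hi : (i:nat) != i0)) mul0r scale0r.
rewrite (bigD1 k0) //= [X in _ + X]big1 ?addr0; last first.
  by move=> k Hk; rewrite !mxE (negbTE (Hk : (k:nat) != k0)) mulr0 scale0r.
by rewrite !mxE !eqxx mulr1 scale1r.
Qed.

Definition e (l : vp3_letter) : 'rV[int]_6 :=
  if l.2 then - dv 6 (gidx l.1) else dv 6 (gidx l.1).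
Definition ab (w : vp3_word) : 'rV[int]_6 := \sum_(l <- w) e l.
Fixpoint zp (w : vp3_word) : 'rV[int]_9 :=
  if w is l :: w' then beta (e l) (ab w') + zp w' else 0.

Lemma ab_nil : ab [::] = 0.
Proof. exact: big_nil. Qed.
Lemma ab_cons l w : ab (l :: w) = e l + ab w.
Proof. exact: big_cons. Qed.
Lemma ab_cat u v : ab (u ++ v) = ab u + ab v.
Proof. exact: big_cat. Qed.

Ltac rowring := apply/rowP => ?; rewrite ?mxE; ring.

Lemma zp_cat u v : zp (u ++ v) = zp u + zp v + beta (ab u) (ab v).
Proof.
elim: u => [|l u IH] /=; first by rewrite ab_nil beta0l add0r addr0.
rewrite IH ab_cat ab_cons betaDr betaDl; rowring.
Qed.

Lemma e_inv l : e (inv_letter l) = - e l.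
Proof. by case: l => g [] ; rewrite /e /= ?opprK. Qed.

Lemma e_pos g : e (g, false) = dv 6 (gidx g). Proof. by []. Qed.
Lemma e_neg g : e (g, true) = - dv 6 (gidx g). Proof. by []. Qed.

Lemma beta_ee l : beta (e l) (e l) = 0.
Proof. by case: l => g []; rewrite ?e_pos ?e_neg ?betaNl ?betaNr ?opprK beta_dv /Bk ltnn. Qed.

Lemma inv_mid u v m m' : ab m = ab m' -> zp m = zp m' ->
  ab (u ++ m ++ v) = ab (u ++ m' ++ v) /\ zp (u ++ m ++ v) = zp (u ++ m' ++ v).
Proof. by move=> Ha Hz; rewrite !ab_cat !zp_cat !ab_cat Ha Hz. Qed.

Ltac kcase := apply/rowP => -[[|[|[|[|[|[|[|[|[|?]]]]]]]]] ?]; rewrite !mxE //=.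

Lemma eqv_inv u v : eqv u v -> ab u = ab v /\ zp u = zp v.
Proof.
elim=> {u v}.
- by [].
- by move=> u v _ [-> ->].
- by move=> u v w _ [-> ->] _ [-> ->].
- move=> u v x.
  have -> : u ++ v = u ++ [::] ++ v by [].
  apply: inv_mid.
    by rewrite !ab_cons ab_nil e_inv addr0 subrr.
  rewrite /= !ab_cons ab_nil !addr0 e_inv betaNr beta_ee !beta0r.
  by rewrite oppr0 !add0r.
- move=> u v i j k hki hkj hij; apply: inv_mid.
    rewrite !ab_cons ab_nil; rowring.
  rewrite /= !ab_cons ab_nil !addr0 !betaDr !beta0r !addr0 !e_pos !beta_dv.
  case: i hki hij => [[|[|[|i]]] Hi] //; case: j hkj => [[|[|[|j]]] Hj] //;
  case: k => [[|[|[|k]]] Hk] // hki hkj hij; rewrite /Bk /=; kcase.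
Qed.

Lemma ab_winv u : ab (winv u) = - ab u.
Proof.
have [H _] := eqv_inv (cancelL u).
by move: H; rewrite ab_cat ab_nil => /eqP; rewrite addr_eq0 => /eqP.
Qed.

Lemma zp_winv u : zp (winv u) = - zp u + beta (ab u) (ab u).
Proof.
have [_ H] := eqv_inv (cancelL u).
move: H; rewrite zp_cat ab_winv betaNl /= => H.
apply/eqP; rewrite -subr_eq0 -H; apply/eqP; rowring.
Qed.

Definition Kb a b := beta a b - beta b a.

Lemma zp_comm x y : zp (wcomm x y) = Kb (ab x) (ab y).
Proof.
rewrite /wcomm !zp_cat !ab_cat !zp_winv !ab_winv.
rewrite ?betaDl ?betaDr ?betaNl ?betaNr ?betaDl ?betaDr ?betaNl ?betaNr /Kb; rowring.
Qed.

Lemma ab_LCS1 u : LCS 1 u -> ab u = 0.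
Proof.
elim=> {u} /=.
- move=> w [x [y [_ ->]]]; rewrite /wcomm !ab_cat !ab_winv; rowring.
- exact: ab_nil.
- by move=> u v _ Hu _ Hv; rewrite ab_cat Hu Hv addr0.
- by move=> u _ Hu; rewrite ab_winv Hu oppr0.
- by move=> u v E _ Hu; have [<- _] := eqv_inv E.
Qed.

Lemma zp_LCS2 u : LCS 2 u -> ab u = 0 /\ zp u = 0.
Proof.
elim=> {u} /=.
- move=> w [x [y [Hx ->]]]; split; first by apply: ab_LCS1; apply: LCS_base.
  by rewrite zp_comm /Kb (ab_LCS1 Hx) beta0l beta0r subrr.
- by rewrite ab_nil.
- move=> u v _ [Hu Hu'] _ [Hv Hv'].
  by rewrite ab_cat zp_cat Hu Hv Hu' Hv' beta0l !addr0.
- move=> u _ [Hu Hu']; rewrite ab_winv zp_winv Hu Hu' beta0l.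
  by split; rewrite ?oppr0 ?addr0.
- by move=> u v E _ Hu; have [<- <-] := eqv_inv E.
Qed.

Lemma zp_cat1 u v : ab u = 0 -> zp (u ++ v) = zp u + zp v.
Proof. by move=> H; rewrite zp_cat H beta0l addr0. Qed.

Fixpoint rep (k : nat) (c : vp3_word) : vp3_word :=
  if k is k'.+1 then c ++ rep k' c else [::].

Definition pw (c : vp3_word) (n : int) : vp3_word :=
  match n with Posz k => rep k c | Negz k => rep k.+1 (winv c) end.

Lemma pwS c n : eqv (c ++ pw c n) (pw c (1 + n)).
Proof.
case: n => k.
  have -> : 1 + Posz k = Posz k.+1 by rewrite addrC -PoszD addn1.
  reflexivity.
rewrite /=; setoid_rewrite canR.
case: k => [|k]; first by rewrite NegzE addrC subrr; reflexivity.
have -> : 1 + Negz k.+1 = Negz k by rewrite !NegzE; lia.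
reflexivity.
Qed.

Lemma pwP c n : eqv (winv c ++ pw c n) (pw c (-1 + n)).
Proof.
case: n => k.
  case: k => [|k]; first by rewrite addr0 /=; reflexivity.
  have -> : -1 + Posz k.+1 = Posz k by lia.
  rewrite /=; setoid_rewrite canL; reflexivity.
have -> : -1 + Negz k = Negz k.+1 by rewrite !NegzE; lia.
reflexivity.
Qed.

Lemma pw_add c a b : eqv (pw c a ++ pw c b) (pw c (a + b)).
Proof.
case: a => k.
  elim: k => [|k IH]; first by rewrite add0r; reflexivity.
  rewrite /= -catA.
  transitivity (c ++ pw c (Posz k + b)); first exact: eqv_catl.
  rewrite pwS.
  have -> : 1 + (Posz k + b) = Posz k.+1 + b by lia.
  reflexivity.
elim: k => [|k IH].
  rewrite /= -catA /=; rewrite pwP.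
  have -> : -1 + b = Negz 0 + b by rewrite NegzE.
  reflexivity.
have -> : pw c (Negz k.+1) = winv c ++ pw c (Negz k) by [].
rewrite -catA.
transitivity (winv c ++ pw c (Negz k + b)); first exact: eqv_catl.
rewrite pwP.
have -> : -1 + (Negz k + b) = Negz k.+1 + b by rewrite !NegzE; lia.
reflexivity.
Qed.

Lemma rep_LCS n k c : LCS n c -> LCS n (rep k c).
Proof. by move=> H; elim: k => [|k IH] /=; [apply: LCS_one | apply: LCS_mul]. Qed.

Lemma pw_LCS n c z : LCS n c -> LCS n (pw c z).
Proof. by case: z => k H; rewrite /pw; apply: rep_LCS => //; apply: LCS_inv. Qed.

Lemma rep_ab k c : ab c = 0 -> ab (rep k c) = 0.
Proof. by move=> H; elim: k => [|k IH] /=; rewrite ?ab_nil // ab_cat H IH addr0. Qed.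

Lemma rep_zp k c : ab c = 0 -> zp (rep k c) = (Posz k) *: zp c.
Proof.
move=> H; elim: k => [|k IH] /=; first by rewrite scale0r.
have -> : Posz k.+1 = Posz k + 1 by lia.
by rewrite zp_cat1 // IH scalerDl scale1r addrC.
Qed.

Lemma pw_zp c z : ab c = 0 -> zp (pw c z) = z *: zp c.
Proof.
move=> H; case: z => k; rewrite /pw; first exact: rep_zp.
rewrite rep_zp; last by rewrite ab_winv H oppr0.
by rewrite zp_winv H beta0l addr0 NegzE scalerN scaleNr.
Qed.

Definition px (m : nat) : nat :=
  (match m with 0 => 1 | 1 => 2 | 2 => 3 | 3 => 3 | 4 => 4 | 5 => 4 | _ => 5 end)%N.
Definition qy (m : nat) : nat :=
  (match m with 0 => 0 | 1 => 0 | 2 => 1 | 3 => 2 | 4 => 1 | 5 => 2 | 6 => 0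
   | 7 => 3 | _ => 4 end)%N.

Definition cbx (m : nat) : vp3_word := [:: pos (genn (px m))].
Definition cby (m : nat) : vp3_word := [:: pos (genn (qy m))].
Definition cb (m : nat) : vp3_word := wcomm (cbx m) (cby m).

Lemma ab_pos g : ab [:: pos g] = dv 6 (gidx g).
Proof. by rewrite ab_cons ab_nil addr0. Qed.

Lemma cb_LCS m : LCS 1 (cb m).
Proof. exact: LCS_base. Qed.

Lemma ab_cb m : ab (cb m) = 0.
Proof. exact: ab_LCS1 (cb_LCS m). Qed.

Lemma zp_cb m : (m < 9)%N -> zp (cb m) = d9 m.
Proof.
rewrite /cb zp_comm /cbx /cby !ab_pos /Kb !beta_dv.
by case: m => [|[|[|[|[|[|[|[|[|m]]]]]]]]] // _; rewrite /Bk /=; kcase.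
Qed.

Lemma pw_ab c z : ab c = 0 -> ab (pw c z) = 0.
Proof. move=> H; case: z => k; rewrite /pw; apply: rep_ab => //; by rewrite ab_winv H oppr0. Qed.

Fixpoint Cl (l : seq 'I_9) (z : 'rV[int]_9) : vp3_word :=
  if l is m :: l' then pw (cb m) (z 0 m) ++ Cl l' z else [::].

Definition C z := Cl (index_enum 'I_9) z.

Lemma Cl_LCS l z : LCS 1 (Cl l z).
Proof.
elim: l => [|m l IH]; first exact: LCS_one.
by apply: LCS_mul => //; apply: pw_LCS; apply: cb_LCS.
Qed.

Lemma C_LCS z : LCS 1 (C z).
Proof. exact: Cl_LCS. Qed.

Lemma Cl_add l z w : cong (Cl l z ++ Cl l w) (Cl l (z + w)).
Proof.
elim: l => [|m l IH] /=; first reflexivity.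
rewrite -catA (central_l _ _ (pw_LCS _ (cb_LCS m))) catA IH mxE.
apply: cat_cong_Proper; last reflexivity.
apply: eqv_cong; exact: pw_add.
Qed.

Lemma C_add z w : cong (C z ++ C w) (C (z + w)).
Proof. exact: Cl_add. Qed.

Lemma Cl0 l : Cl l 0 = [::].
Proof. by elim: l => [|m l IH] //=; rewrite IH mxE. Qed.

Lemma C0 : C 0 = [::].
Proof. exact: Cl0. Qed.

Lemma C_neg z : cong (winv (C z)) (C (- z)).
Proof.
symmetry; apply: cong_solve.
by rewrite C_add subrr C0; reflexivity.
Qed.

Lemma zp_Cl l z : zp (Cl l z) = \sum_(m <- l) z 0 m *: d9 m.
Proof.
elim: l => [|m l IH] /=; first by rewrite big_nil.
rewrite big_cons zp_cat1; last exact: pw_ab (ab_cb _).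
by rewrite IH pw_zp ?ab_cb // zp_cb.
Qed.

Lemma zp_C z : zp (C z) = z.
Proof.
rewrite /C zp_Cl; apply/rowP => j; rewrite summxE (bigD1 j) //= big1 ?addr0.
  by rewrite !mxE eqxx mulr1.
by move=> i Hi; rewrite !mxE eq_sym (negbTE (Hi : (i:nat) != j)) mulr0.
Qed.

Lemma pw1 c : pw c 1 = c ++ [::].
Proof. by []. Qed.
Lemma pw0 c : pw c 0 = [::].
Proof. by []. Qed.

Lemma Cl_d l (m : 'I_9) : uniq l -> eqv (Cl l (d9 m)) (if m \in l then cb m else [::]).
Proof.
elim: l => [|x l IH] /=; first reflexivity.
case/andP => Hx Hu; rewrite in_cons mxE.
case: (eqVneq m x) => [Emx|Hmx] /=.
  rewrite -Emx in Hx *; rewrite eqxx pw1 -catA cat0s.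
  transitivity (cb m ++ [::]); last by rewrite cats0; reflexivity.
  by apply: eqv_catl; move: (IH Hu); rewrite (negbTE Hx).
rewrite eq_sym (negbTE (Hmx : (m:nat) != x)) pw0 cat0s.
exact: IH.
Qed.

Lemma C_d (m : 'I_9) : cong (C (d9 m)) (cb m).
Proof.
apply: eqv_cong; rewrite /C (Cl_d m (index_enum_uniq _)) mem_index_enum.
reflexivity.
Qed.

Lemma cong_zp u v : LCS 1 u -> LCS 1 v -> cong u v -> zp u = zp v.
Proof.
move=> Hu Hv /zp_LCS2 [_]; rewrite zp_cat1 ?(ab_LCS1 Hu) // zp_winv (ab_LCS1 Hv).
by rewrite beta0l addr0 => /eqP; rewrite subr_eq0 => /eqP.
Qed.

Lemma cong_solve2 a b d : cong (a ++ b) d -> cong b (winv a ++ d).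
Proof.
move=> H.
transitivity (winv a ++ (a ++ b)); first by apply: eqv_cong; symmetry; apply: canL.
rewrite H; reflexivity.
Qed.

Definition P x y := cong (wcomm x y) (C (zp (wcomm x y))).

Lemma P_sym x y : P x y -> P y x.
Proof.
rewrite /P => H; rewrite (comm_sym x y) zp_winv (ab_LCS1 (LCS1_comm x y)) beta0l addr0.
transitivity (winv (C (zp (wcomm x y)))); last exact: C_neg.
exact: winv_cong_Proper.
Qed.

Lemma P_catl a b y : P a y -> P b y -> P (a ++ b) y.
Proof.
rewrite /P => Ha Hb.
have E := comm_catl a b y.
rewrite (cong_zp (LCS1_comm _ _) _ E); last by apply: LCS_mul; apply: LCS1_comm.
rewrite zp_cat1 ?(ab_LCS1 (LCS1_comm _ _)) //.
transitivity (wcomm a y ++ wcomm b y); first exact: E.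
transitivity (C (zp (wcomm a y)) ++ C (zp (wcomm b y))); last exact: C_add.
exact: cat_cong_Proper.
Qed.

Lemma P_invl a y : P a y -> P (winv a) y.
Proof.
rewrite /P => Ha.
have E := comm_invl a y.
rewrite (cong_zp (LCS1_comm _ _) _ E); last by apply: LCS_inv; apply: LCS1_comm.
rewrite zp_winv (ab_LCS1 (LCS1_comm _ _)) beta0l addr0.
transitivity (winv (wcomm a y)); first exact: E.
transitivity (winv (C (zp (wcomm a y)))); last exact: C_neg.
exact: winv_cong_Proper.
Qed.

Lemma P_nil y : P [::] y.
Proof.
have E : eqv (wcomm [::] y) [::] by rewrite /wcomm /=; exact: cancelL.
rewrite /P (eqv_inv E).2 /= C0; exact: eqv_cong.
Qed.

Lemma P_refl x : P x x.
Proof.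
have E : eqv (wcomm x x) [::].
  rewrite /wcomm; setoid_rewrite canL; exact: cancelL.
rewrite /P (eqv_inv E).2 /= C0; exact: eqv_cong.
Qed.

Lemma P_rel x y z : eqv (x ++ y ++ z) (z ++ y ++ x) -> P x y -> P y z -> P x z.
Proof.
move=> R; rewrite /P => Hxy Hyz.
have H := rel_cong R.
have L := LCS1_comm.
have [_ Z] := zp_LCS2 H; move: Z; rewrite /= cats0.
rewrite (zp_cat1 _ (ab_LCS1 (L x y))) (zp_cat1 _ (ab_LCS1 (L x z))) => Z.
have -> : zp (wcomm x z) = - zp (wcomm y z) - zp (wcomm x y).
  by apply/eqP; rewrite -subr_eq0 -Z; apply/eqP; rowring.
have H1 := cong_solve2 H; rewrite cats0 in H1.
have H2 : cong (wcomm y z ++ wcomm x z) (winv (wcomm x y)).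
  by rewrite -H1; exact: central (L _ _).
have H3 := cong_solve2 H2.
transitivity (winv (wcomm y z) ++ winv (wcomm x y)); first exact: H3.
transitivity (C (- zp (wcomm y z)) ++ C (- zp (wcomm x y))); last exact: C_add.
apply: cat_cong_Proper.
  transitivity (winv (C (zp (wcomm y z)))); last exact: C_neg.
  exact: winv_cong_Proper.
transitivity (winv (C (zp (wcomm x y)))); last exact: C_neg.
exact: winv_cong_Proper.
Qed.

Lemma P_cb m : (m < 9)%N -> P (cbx m) (cby m).
Proof.
move=> Hm; rewrite /P -/(cb m) (zp_cb Hm).
symmetry; exact: (C_d (Ordinal Hm)).
Qed.

Lemma relw (i j k : 'I_3) (hki : k != i) (hkj : k != j) (hij : i != j) :
  eqv [:: pos (lam hki); pos (lam hkj); pos (lam hij)]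
      [:: pos (lam hij); pos (lam hkj); pos (lam hki)].
Proof. exact: (eqv_rel [::] [::] hki hkj hij). Qed.

Notation Pn p q := (P [:: pos (genn p)] [:: pos (genn q)]).

Lemma P40 : Pn 4 0.
Proof.
apply: (@P_rel [:: pos (genn 4)] [:: pos (genn 5)] [:: pos (genn 0)]).
- exact: (@relw o0 o1 o2 isT isT isT).
- exact: P_sym (P_cb (m:=8) isT).
- exact: (P_cb (m:=6) isT).
Qed.

Lemma P21 : Pn 2 1.
Proof.
apply: (@P_rel [:: pos (genn 2)] [:: pos (genn 3)] [:: pos (genn 1)]).
- exact: (@relw o0 o2 o1 isT isT isT).
- exact: P_sym (P_cb (m:=3) isT).
- exact: (P_cb (m:=2) isT).
Qed.

Lemma P52 : Pn 5 2.
Proof.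
apply: (@P_rel [:: pos (genn 5)] [:: pos (genn 4)] [:: pos (genn 2)]).
- exact: (@relw o1 o0 o2 isT isT isT).
- exact: (P_cb (m:=8) isT).
- exact: (P_cb (m:=5) isT).
Qed.

Lemma P30 : Pn 3 0.
Proof.
apply: P_sym.
apply: (@P_rel [:: pos (genn 0)] [:: pos (genn 1)] [:: pos (genn 3)]).
- exact: (@relw o1 o2 o0 isT isT isT).
- exact: P_sym (P_cb (m:=0) isT).
- exact: P_sym (P_cb (m:=2) isT).
Qed.

Lemma P43 : Pn 4 3.
Proof.
apply: P_sym.
apply: (@P_rel [:: pos (genn 3)] [:: pos (genn 2)] [:: pos (genn 4)]).
- exact: (@relw o2 o0 o1 isT isT isT).
- exact: (P_cb (m:=3) isT).
- exact: P_sym (P_cb (m:=5) isT).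
Qed.

Lemma P51 : Pn 5 1.
Proof.
apply: P_sym.
apply: (@P_rel [:: pos (genn 1)] [:: pos (genn 0)] [:: pos (genn 5)]).
- exact: (@relw o2 o1 o0 isT isT isT).
- exact: (P_cb (m:=0) isT).
- exact: P_sym (P_cb (m:=6) isT).
Qed.

Lemma Pn_all p q : (p < 6)%N -> (q < 6)%N -> Pn p q.
Proof.
wlog: p q / (q <= p)%N => [Hw Hp Hq|].
  case: (leqP q p) => H; first exact: Hw.
  by apply: P_sym; apply: Hw => //; apply: ltnW.
case: p => [|[|[|[|[|[|p]]]]]]; case: q => [|[|[|[|[|[|q]]]]]] // _ _ _;
  first [ exact: P_refl | exact: P40 | exact: P21 | exact: P52 | exact: P30
        | exact: P43 | exact: P51
        | exact: (P_cb (m:=0) isT) | exact: (P_cb (m:=1) isT)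
        | exact: (P_cb (m:=2) isT) | exact: (P_cb (m:=3) isT)
        | exact: (P_cb (m:=4) isT) | exact: (P_cb (m:=5) isT)
        | exact: (P_cb (m:=6) isT) | exact: (P_cb (m:=7) isT)
        | exact: (P_cb (m:=8) isT) ].
Qed.

Lemma P_gen g h : P [:: pos g] [:: pos h].
Proof.
rewrite -(genn_gidx g) -(genn_gidx h).
exact: Pn_all (ltn_ord _) (ltn_ord _).
Qed.

Lemma P_letter l m : P [:: l] [:: m].
Proof.
have Hw : forall (x : vp3_letter) y, P [:: pos x.1] y -> P [:: x] y.
  move=> [g []] y H //; have := P_invl H; by [].
apply: (Hw _ _); apply: P_sym; apply: (Hw _ _); apply: P_sym; exact: P_gen.
Qed.

Lemma P_all x y : P x y.
Proof.
elim: x => [|l x IH]; first exact: P_nil.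
apply: (@P_catl [:: l] x); last exact: IH.
elim: y {IH} => [|m y IH]; first exact: P_sym (P_nil _).
apply: P_sym; apply: (@P_catl [:: m] y); apply: P_sym => //.
exact: P_letter.
Qed.

Lemma main_cong u : LCS 1 u -> cong u (C (zp u)).
Proof.
elim=> {u}.
- by move=> w [x [y [_ ->]]]; exact: P_all.
- by rewrite /= C0; reflexivity.
- move=> u v Hu Hu' Hv Hv'.
  rewrite zp_cat1 ?(ab_LCS1 Hu) //.
  transitivity (C (zp u) ++ C (zp v)); last exact: C_add.
  exact: cat_cong_Proper.
- move=> u Hu Hu'.
  rewrite zp_winv (ab_LCS1 Hu) beta0l addr0.
  transitivity (winv (C (zp u))); last exact: C_neg.
  exact: winv_cong_Proper.
- move=> u v E Hu Hu'.
  rewrite -(eqv_inv E).2.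
  transitivity u; last exact: Hu'.
  by apply: eqv_cong; symmetry.
Qed.

Theorem lemma5p6 :
  exists f : vp3_word -> 'rV[int]_9,
    (forall u v, Gamma 2 u -> vp3_eqv u v -> f u = f v) /\
    (forall u v, Gamma 2 u -> Gamma 2 v -> f (u ++ v) = f u + f v) /\
    (forall z : 'rV[int]_9, exists u, Gamma 2 u /\ f u = z) /\
    (forall u, Gamma 2 u -> (f u = 0 <-> Gamma 3 u)).
Proof.
exists zp; split; [|split; [|split]].
- by move=> u v _ E; exact: (eqv_inv E).2.
- by move=> u v Hu _; exact: zp_cat1 (ab_LCS1 Hu).
- by move=> z; exists (C z); split; [exact: C_LCS | exact: zp_C].
- move=> u Hu; split.
    move=> H0; have := main_cong Hu; rewrite H0 C0 /cong /= cats0.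
    by [].
  by move=> H; exact: (zp_LCS2 H).2.
Qed.
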